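(* Let $X$ be a complex Banach space and $T:X\to X$ a recurrent bounded linear operator. Let $\{T\}'=\{A: A \text{ bounded linear on } X,\ AT=TA\}$ be the commutant of $T$, and suppose there is a subset $\mathcal M\subset\{T\}'$ such that the set $\{x\in X:\overline{\{Ax:A\in\mathcal M\}}=X\}$ is residual in $X$. Then $T\oplus T$ is recurrent on $X\oplus X$.
   Context: An operator $S$ on a Banach space $Y$ is recurrent if for every non-empty open $U\subset Y$ there is a positive integer $k$ with $U\cap S^{-k}(U)\neq\emptyset$. $T\oplus T$ acts on $X\oplus X$ by $(x,y)\mapsto(Tx,Ty)$. A set is residual if it contains a countable intersection of dense open sets. *)

(* Defs.v *)
From mathcomp Require Import all_boot all_algebra.
From mathcomp Require Import all_classical all_reals all_analysis.
From mathcomp Require Export complex.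
Import numFieldNormedType.Exports.
Set Implicit Arguments. Unset Strict Implicit. Unset Printing Implicit Defensive.
Local Open Scope classical_set_scope.

Definition recurrent (Y : topologicalType) (S : Y -> Y) : Prop :=
  forall U : set Y, open U -> U !=set0 ->
    exists k : nat, (0 < k)%N /\ (U `&` (iter k S) @^-1` U) !=set0.

Definition residual (Y : topologicalType) (A : set Y) : Prop :=
  exists F : nat -> set Y, (forall n, open (F n) /\ dense (F n)) /\
    \bigcap_n F n `<=` A.

Definition dsum_op (X : Type) (T : X -> X) : X * X -> X * X :=
  fun p => (T p.1, T p.2).

(* Main.v *)
Require Import Defs.
From mathcomp Require Import order.
From mathcomp Require Import all_boot all_algebra.
From mathcomp Require Import all_classical all_reals all_analysis.
From mathcomp Require Import complex.
Import numFieldNormedType.Exports.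
Local Open Scope classical_set_scope.
Local Open Scope complex_scope.

Module Helpers.
Import Order.TTheory GRing.Theory Num.Theory.
Section BX.
Local Open Scope ring_scope.
Local Open Scope complex_scope.

Variable R : realType.

Lemma pos_re (e : R[i]) : 0 < e -> 0 < complex.Re e /\ (complex.Re e)%:C <= e.
Proof.
rewrite ltcE lecE /= => /andP[/eqP <- ->]; split => //.
by rewrite eqxx lexx.
Qed.

Arguments pos_re {e}.
Lemma arch_re (e : R[i]) : 0 < e -> exists n : nat, (n.+1%:R^-1 : R)%:C < e.
Proof.
move=> /[dup] e0 /pos_re [he _].
exists (Num.truncn (complex.Re e)^-1).
move: e0; rewrite !ltcE /= => /andP[/eqP <- _]; rewrite eqxx /=.
by rewrite -ltf_pV2 ?(posrE,invr_gt0)// invrK Num.Theory.truncnS_gt.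
Qed.


Arguments arch_re {e}.
Lemma baireX (X : completeNormedModType R[i]) (F : nat -> set X) :
  (forall n, open (F n) /\ dense (F n)) -> dense (\bigcap_n F n).
Proof.
move=> odF D [d0 Dd0] oD.
have [e0 e0p be0] : nbhs_ball d0 D by apply/nbhs_ballP; apply: open_nbhs_nbhs.
have [r0p r0le] := pos_re e0p.
pose r0 := complex.Re e0 / 2.
have r0gt : 0 < r0 by rewrite divr_gt0.
have r0D : ball d0 (r0 + r0)%:C `<=` D.
  apply: subset_trans be0; apply: subset_trans (le_ball r0le).
  by apply: le_ball; rewrite lecR -splitr.
pose P (n : nat) (p q : X * R) := 0 < q.2 /\ q.2 <= n.+1%:R^-1 /\
   ball q.1 (q.2 + q.2)%:C `<=` ball p.1 p.2%:C `&` F n.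
have Ar : forall np : nat * (X * R), exists q, 0 < np.2.2 -> P np.1 np.2 q.
  move=> [n [x r]] /=.
  have [|rp] := boolP (0 < r); last by exists (x, r).
  move=> rp.
  have [y [bxy Fy]] : (ball x r%:C `&` F n) !=set0.
    apply: (proj2 (odF n)); last exact: ball_open.
    by exists x; apply: ballxx; rewrite ltcR.
  have : nbhs y (ball x r%:C `&` F n).
    by apply: open_nbhs_nbhs; split => //; apply: openI; [exact: ball_open|exact: (proj1 (odF n))].
  move=> /nbhs_ballP [e ep be].
  have [rep rele] := pos_re ep.
  exists (y, Num.min (complex.Re e / 2) (n.+1%:R^-1)) => _ /=; split; [|split].
  - by rewrite lt_min divr_gt0 //= invr_gt0.
  - by rewrite ge_min lexx orbT.
  - apply: subset_trans be; apply: subset_trans (le_ball rele).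
    apply: le_ball; rewrite lecR.
    have h : Num.min (complex.Re e / 2) (n.+1%:R^-1) <= complex.Re e / 2 by rewrite ge_min lexx.
    by rewrite [leRHS]splitr lerD.
have [f Pf] := choice Ar.
pose fix ar n := if n is k.+1 then f (k, ar k) else (d0, r0).
pose a n := (ar n).1. pose r n := (ar n).2.
have rpos : forall n, 0 < r n.
  elim => [//|n IH]; by have [] := Pf (n, ar n) IH.
have Pn : forall n, P n (ar n) (ar n.+1) by move=> n; exact: (Pf (n, ar n) (rpos n)).
have nest : forall n m, (n <= m)%N -> ball (a m) (r m)%:C `<=` ball (a n) (r n)%:C.
  move=> n m; elim: m => [|m IH]; first by rewrite leqn0 => /eqP ->.
  rewrite leq_eqVlt => /orP[/eqP -> //|/IH]; apply: subset_trans.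
  have [hp [_ hb]] := Pn m.
  apply: subset_trans (subset_trans hb (@subIsetl _ _ _)).
  by apply: le_ball; rewrite lecR lerDr ltW.
have inb : forall n m, (n <= m)%N -> ball (a n) (r n)%:C (a m).
  by move=> n m nm; apply: nest nm _ _; apply: ballxx; rewrite ltcR.
have : cvg (a @ \oo).
  apply: cauchy_cvg; apply: cauchy_exP => e ep.
  have [N hN] := arch_re ep.
  exists (a N.+1); exists N.+1 => // m Nm.
  apply: le_ball (ltW _) _ (inb _ _ Nm).
  apply: le_lt_trans hN; rewrite lecR.
  by have [_ [h _]] := Pn N.
move=> /cvg_ex [l al].
have lb : forall n, ball (a n) (r n + r n)%:C l.
  move=> n.
  have hr : 0 < (r n)%:C by rewrite ltcR.
  have hl : \forall m \near \oo, ball l (r n)%:C (a m) := al _ (nbhsx_ballx l _ hr).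
  have := filterI hl (nbhs_infty_ge n); move=> /(_ _)/filter_ex.
  move=> [m [h1 h2]].
  rewrite rmorphD /=.
  exact: ball_triangle (inb _ _ h2) (ball_sym h1).
exists l; split; first exact: r0D (lb 0%N).
move=> n _.
by have [_ [_ /(_ l (lb n.+1)) []]] := Pn n.
Qed.

End BX.


Lemma iter_dsum (X : Type) (T : X -> X) k (p : X * X) :
  iter k (dsum_op T) p = (iter k T p.1, iter k T p.2).
Proof. case: p => x y; elim: k => [//|k IH] /=; by rewrite IH. Qed.

Lemma iter_comm (X : Type) (T A : X -> X) k x :
  A \o T = T \o A -> A (iter k T x) = iter k T (A x).
Proof.
move=> h; elim: k => [//|k IH] /=.
by rewrite -IH; have := congr1 (fun f => f (iter k T x)) h.
Qed.
End Helpers.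

Theorem theorem9p1 (R : realType) (X : completeNormedModType R[i])
  (T : {linear X -> X}) (hTc : continuous T) (hTrec : recurrent T)
  (M : set {linear X -> X})
  (hM : forall A : {linear X -> X}, M A -> continuous A /\ A \o T = T \o A)
  (hres : residual [set x : X |
            closure ((fun A : {linear X -> X} => A x) @` M) = [set: X]]) :
  recurrent (dsum_op T : (X * X)%type -> (X * X)%type).
Proof.
move=> W oW [[a b] Wab].
have [e ep be] : nbhs_ball (a, b) W by apply/nbhs_ballP; apply: open_nbhs_nbhs.
have [F [odF subF]] := hres.
have [x [bax Fx]] : ball a e `&` \bigcap_n F n !=set0.
  apply: (@Helpers.baireX _ _ _ odF); last exact: ball_open.
  by exists a; apply: ballxx.
have cb : closure ((fun A : {linear X -> X} => A x) @` M) b.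
  by have -> := subF x Fx.
have [y [[A MA <-] bAx]] := cb (ball b e) (nbhsx_ballx b e ep).
have [cA cAT] := hM A MA.
pose U' := ball a e `&` A @^-1` ball b e.
have oU' : open U'.
  by apply: openI; [exact: ball_open | apply/(continuousP A).1 => //; exact: ball_open].
have [k [k0 [z [[bz1 bz2] [bz3 bz4]]]]] := hTrec U' oU' (ex_intro _ x (conj bax bAx)).
exists k; split => //; exists (z, A z); split.
  by apply: be; split.
rewrite /preimage /= Helpers.iter_dsum /=.
apply: be; split => //=.
by rewrite -Helpers.iter_comm.
Qed.
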